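(* Let $\mathcal{L}:\mathbb{R}^n\to\mathbb{R}$ be differentiable, let $(\eta^{(t)})_{t\ge 0}$ be positive learning rates and $(d^{(t)})_{t\ge0}$ nonnegative scalar thresholds. Let $\theta^{(t)}\in\mathbb{R}^n$ be hidden weights and $w^{(t)}=\mathcal{S}_{d^{(t)}}(\theta^{(t)})$ the actual weights, updated by $$\theta^{(t+1)}=\theta^{(t)}-\eta^{(t)}\,\nabla_w\mathcal{L}(w^{(t)})\odot\nabla_\theta w(\theta^{(t)},d^{(t)}),\qquad w^{(t+1)}=\mathcal{S}_{d^{(t+1)}}(\theta^{(t+1)}),$$ where the $i$-th component of $\nabla_\theta w(\theta^{(t)},d^{(t)})$ is the derivative of $\theta\mapsto \mathcal{S}_{d^{(t)}}(\theta)$ at $\theta_i^{(t)}$ whenever $|\theta_i^{(t)}|\neq d^{(t)}$ (so it equals $1$ when $|\theta_i^{(t)}|>d^{(t)}$). Let $i$ be an index with $w_i^{(t)}\neq 0$ such that $|\theta_i^{(t+1)}|>d^{(t)}$ and $\operatorname{sign}(\theta_i^{(t+1)})=\operatorname{sign}(\theta_i^{(t)})$. Then $$w_i^{(t+1)}=\mathcal{S}_{d^{(t+1)}-d^{(t)}}\Big(w_i^{(t)}-\eta^{(t)}\,\frac{\partial\mathcal{L}}{\partial w_i}(w^{(t)})\Big).$$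
   Context: $\odot$ is the element-wise product. The soft threshold mapping with scalar threshold $d$ is the element-wise map $\mathcal{S}_d(x)_i=\operatorname{sign}(x_i)\max\{|x_i|-d,0\}$ (applied to scalars likewise). *)

(* Defs.v *)
From HB Require Import structures.
From mathcomp Require Import all_boot all_order all_algebra.
From mathcomp Require Import all_classical all_reals all_analysis.
Set Implicit Arguments. Unset Strict Implicit. Unset Printing Implicit Defensive.
Import Order.TTheory GRing.Theory Num.Theory.
Import numFieldNormedType.Exports.
Local Open Scope ring_scope.

Definition soft {R : realType} (d : R) (x : R) : R :=
  Num.sg x * Num.max (`|x| - d) 0.

Definition softv {R : realType} {n : nat} (d : R) (x : 'rV[R]_n) : 'rV[R]_n :=
  map_mx (soft d) x.

Definition partial {R : realType} {n : nat} (L : 'rV[R]_n -> R) (i : 'I_n)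
  (w : 'rV[R]_n) : R :=
  'D_(delta_mx 0 i) L w.

(* Main.v *)
Require Import Defs.
From HB Require Import structures.
From mathcomp Require Import all_boot all_order all_algebra.
From mathcomp Require Import all_classical all_reals all_analysis.
Import Order.TTheory GRing.Theory Num.Theory.
Import numFieldNormedType.Exports.
Local Open Scope ring_scope.

Lemma soft_derive1 (R : realType) (d x : R) : 0 <= d -> d < `|x| ->
  derive1 (soft d) x = 1.
Proof.
move=> d0 dx.
have [xpos|xneg] := ltP 0 x.
- rewrite gtr0_norm // in dx.
  rewrite derive1E (@near_eq_derive _ _ _ _ (fun y => y - d)).
    rewrite deriveB //= ?derive_id ?derive_cst ?subr0 //.
  near=> y.
  have yd : d < y by near: y; exact: lt_nbhsr.
  rewrite /soft gtr0_sg ?mul1r ?gtr0_norm; try by apply: le_lt_trans yd.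
  by rewrite max_l // subr_ge0 ltW.
- rewrite ler0_norm // in dx.
  rewrite derive1E (@near_eq_derive _ _ _ _ (fun y => y + d)).
    rewrite deriveD //= ?derive_id ?derive_cst ?addr0 //.
  near=> y.
  have yd : y < - d by near: y; apply: lt_nbhsl; rewrite ltrNr.
  have yn : y < 0 by apply: (lt_le_trans yd); rewrite oppr_le0.
  rewrite /soft ltr0_sg ?ltr0_norm // max_l; last by rewrite subr_ge0 -lerNr ltW.
  by rewrite mulN1r opprB opprK addrC.
Unshelve. all: by end_near.
Qed.

Theorem lemma1 (R : realType) (n : nat) (L : 'rV[R]_n -> R)
  (eta d : nat -> R) (theta : nat -> 'rV[R]_n) (Dw : nat -> 'rV[R]_n)
  (t : nat) (i : 'I_n) :
  (forall x, differentiable L x) ->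
  (forall s, 0 < eta s) ->
  (forall s, 0 <= d s) ->
  (* Dw s = nabla_theta w(theta^(s), d^(s)), componentwise the derivative of
     S_{d^(s)} at theta_j^(s) whenever |theta_j^(s)| <> d^(s) *)
  (forall s (j : 'I_n), `|theta s 0 j| != d s ->
     Dw s 0 j = derive1 (soft (d s)) (theta s 0 j)) ->
  (* update rule for the hidden weights *)
  (forall s (j : 'I_n),
     theta s.+1 0 j = theta s 0 j
       - eta s * partial L j (softv (d s) (theta s)) * Dw s 0 j) ->
  softv (d t) (theta t) 0 i != 0 ->
  d t < `|theta t.+1 0 i| ->
  Num.sg (theta t.+1 0 i) = Num.sg (theta t 0 i) ->
  softv (d t.+1) (theta t.+1) 0 i
  = soft (d t.+1 - d t)
      (softv (d t) (theta t) 0 i - eta t * partial L i (softv (d t) (theta t))).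
Proof.
move=> _ _ hd hDw hupd.
rewrite /softv !mxE.
set x := theta t 0 i.
set g := partial L i _.
move=> hw hy hsg.
have dx : d t < `|x|.
  by rewrite ltNge; apply: contra hw => h; rewrite /soft max_r ?mulr0 // subr_le0.
have hy' : theta t.+1 0 i = x - eta t * g.
  rewrite hupd hDw; last by rewrite gt_eqF.
  by rewrite soft_derive1 // mulr1.
move: hy hsg; rewrite hy'; set y := x - eta t * g => hy hsg.
have y0 : y != 0 by apply/negP => /eqP e; move: hy; rewrite e normr0 ltNge hd.
have [xpos|xneg] := ltP 0 x.
- have ypos : 0 < y by rewrite -sgr_gt0 hsg gtr0_sg // ltr01.
  rewrite gtr0_norm // in hy; rewrite gtr0_norm // in dx.
  have -> : soft (d t) x = x - d t.
    by rewrite /soft gtr0_sg // mul1r gtr0_norm // max_l // subr_ge0 ltW.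
  rewrite (_ : x - d t - eta t * g = y - d t); last by rewrite /y addrAC.
  have ydp : 0 < y - d t by rewrite subr_gt0.
  rewrite /soft (gtr0_sg ypos) (gtr0_sg ydp) !mul1r (gtr0_norm ypos) (gtr0_norm ydp).
  by rewrite opprB addrA subrK.
- have xn : x < 0.
    by rewrite lt_neqAle xneg andbT; apply/negP => /eqP e; move: dx; rewrite e normr0 ltNge hd.
  have yneg : y < 0 by rewrite -sgr_lt0 hsg ltr0_sg // ltrN10.
  rewrite ltr0_norm // in hy; rewrite ltr0_norm // in dx.
  have -> : soft (d t) x = x + d t.
    rewrite /soft ltr0_sg // ltr0_norm // max_l; last by rewrite subr_ge0 ltW.
    by rewrite mulN1r opprB opprK addrC.
  rewrite (_ : x + d t - eta t * g = - (- y - d t)); last first.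
    by rewrite /y opprD !opprK addrAC.
  have ydp : 0 < - y - d t by rewrite subr_gt0.
  rewrite /soft sgrN normrN (gtr0_sg ydp) (gtr0_norm ydp) (ltr0_sg yneg) (ltr0_norm yneg).
  suff -> : - y - d t - (d t.+1 - d t) = - y - d t.+1 by [].
  by move: (- y) => a; rewrite opprB addrA subrK.
Qed.
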